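(* Let $G=(V=[n],E,(p_{uv})_{(u,v)\in E})$ be an influence graph, $k\in\{2,\dots,n\}$, $\pi$ an optimal adaptive policy with $|\pi|=k$, and $x_v$ the probability that node $v$ is selected by $\pi$. Then for every partial realisation $\psi$, $$\mathbb{E}_{\mathbf L,\hat{\mathbf L}}\big[\sigma^2_{\mathbf L,\hat{\mathbf L},\psi}(dom(\psi)\cup dom(\hat\Psi_\pi))\,\big|\,\psi\subseteq\Phi\big]\le\mathbb{E}_{\mathbf L}\big[\sigma_{\mathbf L}(dom(\psi))\,\big|\,\psi\subseteq\Phi\big]+\sum_{v\in V\setminus dom(\psi)}x_v\,\Delta^2_\psi(v).$$
   Context: $G$ is a directed graph with activation probabilities $p_{uv}\in[0,1]$. $\mathbf L,\hat{\mathbf L}$ are independent random subsets of $E$, each containing every edge $(u,w)$ independently with probability $p_{uw}$. For $L\subseteq E$, $T\subseteq V$, $\sigma_L(T)$ is the number of nodes reachable by a directed path (length $\ge0$) in $(V,L)$ from $T$. For $T\subseteq V$, $\mathbf L^2(T):=\mathbf L\cup(\hat{\mathbf L}\cap\{(u,w)\in E:u\in T\})$. Realisations: $\Phi(u):=\{u\}\cup\{z:(u,z)\in\mathbf L\}$, $\hat\Phi(u):=\{u\}\cup\{z:(u,z)\in\hat{\mathbf L}\}$. A partial realisation $\psi$ is the restriction of $u\mapsto\{u\}\cup\{z:(u,z)\in L\}$ (for some $L\subseteq E$) to a set $dom(\psi)\subseteq V$; $\psi\subseteq\Phi$ is the event $\Phi(u)=\psi(u)$ for all $u\in dom(\psi)$.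 For $T\subseteq V$, $\sigma^2_{\mathbf L,\hat{\mathbf L},\psi}(T):=\sigma_{\mathbf L^2(T\setminus dom(\psi))}(T)$, and $\Delta^2_\psi(v):=\mathbb{E}[\sigma^2_{\mathbf L,\hat{\mathbf L},\psi}(\{v\}\cup dom(\psi))-\sigma^2_{\mathbf L,\hat{\mathbf L},\psi}(dom(\psi))\mid\psi\subseteq\Phi]$ (conditioning on events of positive probability). An adaptive policy $\pi$ maps partial realisations to a node or STOP; it is run from the empty realisation, and while $\pi(\psi')=v\ne$ STOP it sets $\psi'\leftarrow\psi'\cup\{(v,\Phi(v))\}$, ending with $\Psi_\pi$; $\sigma(\pi):=\mathbb{E}[\sigma_{\mathbf L}(dom(\Psi_\pi))]$; $|\pi|=k$ means $|dom(\Psi_\pi)|=k$ always; $\pi$ is optimal if it maximizes $\sigma(\pi)$ among policies with $|\pi|=k$. $\hat\Psi_\pi$ is the final partial realisation when $\pi$ is run with feedback $\hat\Phi(v)$ in place of $\Phi(v)$. *)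

(* Defs.v *)
From HB Require Import structures.
From mathcomp Require Import all_boot all_order all_algebra.
Set Implicit Arguments. Unset Strict Implicit. Unset Printing Implicit Defensive.
Import Order.TTheory GRing.Theory Num.Theory.
Local Open Scope ring_scope.

Section Influence.
Variables (R : realFieldType) (n : nat).
Notation V := 'I_n.
Notation Edge := (V * V)%type.
Variables (E : {set Edge}) (p : Edge -> R).

Definition prL (L : {set Edge}) : R :=
  if L \subset E then \prod_(e in E) (if e \in L then p e else 1 - p e) else 0.

Definition sigma (L : {set Edge}) (T : {set V}) : nat :=
  #|[set w | [exists t in T, connect (fun u z => (u, z) \in L) t w]]|.

Definition realis (L : {set Edge}) (u : V) : {set V} :=
  u |: [set z | (u, z) \in L].

Definition PR := {ffun V -> option {set V}}.
Definition dom (psi : PR) : {set V} := [set u | psi u != None].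
Definition empty_pr : PR := [ffun => None].
Definition valid_pr (psi : PR) : Prop :=
  exists2 L : {set Edge}, L \subset E & forall u, u \in dom psi -> psi u = Some (realis L u).

Definition consistent (psi : PR) (L : {set Edge}) : bool :=
  [forall u in dom psi, psi u == Some (realis L u)].

(* adaptive policies: partial realisation -> node (Some v) or STOP (None) *)
Definition policy := PR -> option V.

Definition extend (psi : PR) (v : V) (S : {set V}) : PR :=
  [ffun u => if u == v then Some S else psi u].

Fixpoint run_fuel (pi : policy) (L : {set Edge}) (m : nat) (psi : PR) : option PR :=
  match m with
  | 0 => None
  | m'.+1 => match pi psi with
             | None => Some psi
             | Some v => run_fuel pi L m' (extend psi v (realis L v))
             end
  end.

(* A run that stops performs at most n distinct selections (a repeated
   selection leaves the state unchanged, hence loops forever), so n.+1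
   policy calls suffice: run = None iff the policy never stops. *)
Definition run (pi : policy) (L : {set Edge}) : option PR :=
  run_fuel pi L n.+1 empty_pr.

Definition Psi (pi : policy) (L : {set Edge}) : PR := odflt empty_pr (run pi L).

Definition pol_size (pi : policy) (k : nat) : Prop :=
  forall L : {set Edge}, L \subset E ->
    exists2 psi, run pi L = Some psi & #|dom psi| = k.

Definition sigma_pol (pi : policy) : R :=
  \sum_(L : {set Edge}) prL L * (sigma L (dom (Psi pi L)))%:R.

Definition optimal (pi : policy) (k : nat) : Prop :=
  pol_size pi k /\ forall pi', pol_size pi' k -> sigma_pol pi' <= sigma_pol pi.

Definition xsel (pi : policy) (v : V) : R :=
  \sum_(L : {set Edge}) prL L * (v \in dom (Psi pi L))%:R.

Definition prob_cons (psi : PR) : R :=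
  \sum_(L : {set Edge}) prL L * (consistent psi L)%:R.

Definition L2 (L Lh : {set Edge}) (S : {set V}) : {set Edge} :=
  L :|: (Lh :&: [set e in E | e.1 \in S]).

Definition sigma2 (L Lh : {set Edge}) (psi : PR) (T : {set V}) : nat :=
  sigma (L2 L Lh (T :\: dom psi)) T.

Definition cond_exp2 (psi : PR) (X : {set Edge} -> {set Edge} -> R) : R :=
  (\sum_(L : {set Edge}) \sum_(Lh : {set Edge})
      prL L * prL Lh * (consistent psi L)%:R * X L Lh) / prob_cons psi.

Definition cond_exp1 (psi : PR) (X : {set Edge} -> R) : R :=
  (\sum_(L : {set Edge}) prL L * (consistent psi L)%:R * X L) / prob_cons psi.

Definition Delta2 (psi : PR) (v : V) : R :=
  cond_exp2 psi (fun L Lh => (sigma2 L Lh psi (v |: dom psi))%:R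
                              - (sigma2 L Lh psi (dom psi))%:R).

End Influence.

(* Main.v *)
Require Import Defs.
From HB Require Import structures.
From mathcomp Require Import all_boot all_order all_algebra.
From mathcomp Require Import ring.
Set Implicit Arguments. Unset Strict Implicit. Unset Printing Implicit Defensive.
Import Order.TTheory GRing.Theory Num.Theory.
Local Open Scope ring_scope.

Section Run.
Variable n : nat.
Notation V := 'I_n.

Lemma dom_extend (psi : PR n) v S : dom (extend psi v S) = v |: dom psi.
Proof. by apply/setP => u; rewrite /dom !inE ffunE; case: (u =P v). Qed.

Lemma run_fuel_dom (pi : policy n) L m psi r :
  run_fuel pi L m psi = Some r -> dom psi \subset dom r.
Proof.
elim: m psi => [|m IH] psi //=.
case: (pi psi) => [v|].
- move=> /IH; apply: subset_trans; rewrite dom_extend; exact: subsetUr.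
- by case=> <-.
Qed.

Lemma run_fuel_agree (pi : policy n) L L' v m psi r r' :
  (forall u, u != v -> realis L u = realis L' u) ->
  run_fuel pi L m psi = Some r -> run_fuel pi L' m psi = Some r' ->
  (v \in dom r) = (v \in dom r').
Proof.
move=> hag; elim: m psi => [|m IH] psi //=.
case: (pi psi) => [u|]; last by move=> [<-] [<-].
have [->|huv] := eqVneq u v.
- move=> /run_fuel_dom h /run_fuel_dom h'.
  have hv : forall S, v \in dom (extend psi v S) by move=> S; rewrite dom_extend setU11.
  by rewrite (subsetP h _ (hv _)) (subsetP h' _ (hv _)).
- by rewrite (hag _ huv); apply: IH.
Qed.
End Run.

Section Reach.
Variable n : nat.
Notation V := 'I_n.
Notation Edge := (V * V)%type.
Variable E : {set Edge}.

Definition er (L : {set Edge}) : rel V := fun u z => (u, z) \in L.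
Definition reach (L : {set Edge}) (T : {set V}) : {set V} :=
  [set w | [exists t in T, connect (er L) t w]].
Lemma sigmaE L T : sigma L T = #|reach L T|. Proof. by []. Qed.

Lemma connect_mono (L L' : {set Edge}) x y :
  L \subset L' -> connect (er L) x y -> connect (er L') x y.
Proof. move=> hs; apply: connect_sub => u z h; apply: connect1; exact: (subsetP hs). Qed.

Lemma L2_sub1 (L Lh : {set Edge}) (X : {set V}) : L \subset L2 E L Lh X.
Proof. exact: subsetUl. Qed.

Lemma path_split (L Lh : {set Edge}) (X : {set V}) w : forall x p,
  path (er (L2 E L Lh X)) x p -> w = last x p ->
  connect (er L) x w \/ exists2 v, v \in X & connect (er (L2 E L Lh [set v])) v w.
Proof.
move=> x p; elim: p x => [|y p IH] x /=.
- by move=> _ ->; left; exact: connect0.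
- move=> /andP [hxy hp] hw; case: (IH y hp hw) => [hc|]; last by right.
  move: hxy; rewrite /er /L2 !inE /= => /orP [hL | /andP [hLh /andP [hE hX]]].
  + by left; apply: connect_trans (connect1 _) hc; exact hL.
  + right; exists x => //.
    apply: (connect_trans (y:=y)); last by apply: connect_mono hc; exact: L2_sub1.
    apply: connect1; by rewrite /er /L2 !inE /= hLh hE eqxx orbT.
Qed.

Lemma reach_split (L Lh : {set Edge}) (D T : {set V}) :
  reach (L2 E L Lh (T :\: D)) T \subset
  reach L D :|: \bigcup_(v in T :\: D) (reach (L2 E L Lh [set v]) (v |: D) :\: reach L D).
Proof.
apply/subsetP => w hw.
case: (boolP (w \in reach L D)) => hB; first by rewrite inE hB.
rewrite inE (negbTE hB) /=.
move: hw; rewrite inE => /existsP [t /andP [ht /connectP [q hq hw]]].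
case: (path_split hq hw) => [hc | [v hv hc]].
- case: (boolP (t \in D)) => htD.
  + by move: hB; rewrite inE => /existsP; case; exists t; rewrite htD hc.
  + apply/bigcupP; exists t; first by rewrite inE htD ht.
    rewrite inE hB inE; apply/existsP; exists t; rewrite setU11 /=.
    by apply: connect_mono hc; exact: L2_sub1.
- apply/bigcupP; exists v => //.
  by rewrite inE hB inE; apply/existsP; exists v; rewrite setU11.
Qed.

Lemma card_bigcup_le (I : finType) (P : pred I) (C : I -> {set V}) :
  (#|\bigcup_(i | P i) C i| <= \sum_(i | P i) #|C i|)%N.
Proof.
apply: (big_ind2 (fun (A : {set V}) m => #|A| <= m)%N).
- by rewrite cards0.
- move=> A1 m1 A2 m2 h1 h2; apply: leq_trans (leq_card_setU _ _) _; exact: leq_add.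
- by [].
Qed.

Lemma reach_mono (L L' : {set Edge}) (D D' : {set V}) : L \subset L' -> D \subset D' -> reach L D \subset reach L' D'.
Proof.
move=> hL hD; apply/subsetP => w; rewrite !inE => /existsP [t /andP [ht hc]].
apply/existsP; exists t; rewrite (subsetP hD _ ht) /=; exact: connect_mono hc.
Qed.

Lemma L2_set0 (L Lh : {set Edge}) : L2 E L Lh set0 = L.
Proof. by apply/setP => e; rewrite /L2 !inE !andbF orbF. Qed.

Lemma pointwise (R : numDomainType) (L Lh : {set Edge}) (psi : PR n) (S : {set V}) :
  ((sigma2 E L Lh psi (dom psi :|: S))%:R : R) <=
  (sigma L (dom psi))%:R + \sum_(v in ~: dom psi) (v \in S)%:R *
     ((sigma2 E L Lh psi (v |: dom psi))%:R - (sigma2 E L Lh psi (dom psi))%:R).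
Proof.
set D := dom psi.
have h2 : forall v, v \notin D -> (sigma2 E L Lh psi (v |: D))%:R - (sigma2 E L Lh psi D)%:R
   = (#|reach (L2 E L Lh [set v]) (v |: D) :\: reach L D|%:R : R).
  move=> v hv; rewrite /sigma2 setDv L2_set0.
  have -> : (v |: D) :\: D = [set v].
    apply/setP => x; rewrite in_setD in_setU1 in_set1; case: (x =P v) => [->|_] /=; [by rewrite hv | by case: (x \in D)].
  have hs : reach L D \subset reach (L2 E L Lh [set v]) (v |: D).
    by apply: reach_mono; [exact: L2_sub1 | exact: subsetU1].
  by rewrite !sigmaE cardsD (setIidPr hs) natrB // subset_leq_card.
have -> : \sum_(v in ~: D) (v \in S)%:R *
     ((sigma2 E L Lh psi (v |: D))%:R - (sigma2 E L Lh psi D)%:R)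
   = \sum_(v in S :\: D) (#|reach (L2 E L Lh [set v]) (v |: D) :\: reach L D|%:R : R).
  rewrite [LHS]big_mkcond [RHS]big_mkcond /=; apply: eq_bigr => v _.
  rewrite in_setC in_setD; case: (boolP (v \in D)) => hv /=; first by [].
  by case: (v \in S); rewrite ?mul1r ?mul0r // h2.
have hSD : (D :|: S) :\: D = S :\: D.
  by apply/setP => x; rewrite in_setD in_setU in_setD; case: (x \in D); rewrite ?andbF ?andbT.
rewrite /sigma2 hSD -natr_sum -natrD ler_nat.
have hr := reach_split L Lh D (D :|: S); rewrite hSD in hr.
rewrite !sigmaE; apply: leq_trans (subset_leq_card hr) _.
apply: leq_trans (leq_card_setU _ _) _; rewrite leq_add2l.
exact: card_bigcup_le.
Qed.
End Reach.

Section Prob.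
Variable (R : realFieldType) (n : nat).
Notation V := 'I_n.
Notation Edge := (V * V)%type.
Variables (E : {set Edge}) (p : Edge -> R).

Lemma sum_split (O : {set Edge}) (F : {set Edge} -> R) :
  \sum_(L : {set Edge}) F L =
  \sum_(A in powerset O) \sum_(B in powerset (~: O)) F (A :|: B).
Proof.
rewrite pair_big_dep /=.
rewrite (reindex (fun L => (L :&: O, L :\: O))) /=.
  apply: eq_big => L; first by rewrite !powersetE subsetIr setDE subsetIr.
  by rewrite setID.
exists (fun q => q.1 :|: q.2) => [L _ | [A B]]; first by rewrite /= setID.
rewrite inE /= !powersetE => /andP [hA hB]; congr pair; apply/setP => x;
  move: (subsetP hA x) (subsetP hB x); rewrite !inE;
  case: (x \in A); case: (x \in B); case: (x \in O) => //= h1 h2;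
  (try by have := h1 isT); (try by have := h2 isT).
Qed.

Lemma prL_fact (O A B : {set Edge}) : A \subset O -> B \subset ~: O ->
  prL E p (A :|: B) = prL (E :&: O) p A * prL (E :\: O) p B.
Proof.
move=> hA hB; rewrite /prL subUset subsetI hA andbT setDE subsetI hB andbT.
case: (A \subset E); last by rewrite mul0r.
case: (B \subset E); last by rewrite mulr0.
rewrite /= (bigID (mem O)) /=; congr (_ * _); apply: eq_big => e; rewrite ?inE //.
- move=> /andP [_ heO].
  have := subsetP hB e; rewrite inE heO.
  by case: (e \in B) => [/(_ isT) // | _]; rewrite orbF.
- move=> /andP [_ heO].
  have := subsetP hA e; rewrite (negbTE heO).
  by case: (e \in A) => [/(_ isT) // | _].
Qed.

Definition Fe (e : Edge) (b : bool) : R :=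
  if e \in E then (if b then p e else 1 - p e) else (if b then 0 else 1).

Lemma prL_prod (L : {set Edge}) : prL E p L = \prod_(e : Edge) Fe e (e \in L).
Proof.
rewrite (bigID (mem E)) /= /prL.
have -> : \prod_(e | e \in E) Fe e (e \in L) =
          \prod_(e in E) (if e \in L then p e else 1 - p e).
  by apply: eq_bigr => e he; rewrite /Fe he.
case: (boolP (L \subset E)) => hL.
- rewrite /= [X in _ = _ * X]big1 ?mulr1 // => e he; rewrite /Fe (negbTE he).
  case: (boolP (e \in L)) => // heL; by rewrite (subsetP hL _ heL) in he.
- case/subsetPn: hL => e heL heE.
  by rewrite /= [X in _ = _ * X](bigD1 e) //= {1}/Fe (negbTE heE) heL mul0r mulr0.
Qed.

Lemma prL_sum1 : \sum_(L : {set Edge}) prL E p L = 1.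
Proof.
have h1 : \prod_(e : Edge) \sum_(b : bool) Fe e b = 1.
  rewrite big1 // => e _; rewrite big_bool /Fe; case: (e \in E) => /=.
  - by rewrite addrC subrK.
  - by rewrite add0r.
rewrite -h1 bigA_distr_bigA /=.
rewrite (reindex (fun f : {ffun Edge -> bool} => [set e | f e])) /=.
  apply: eq_bigr => f _; rewrite prL_prod; apply: eq_bigr => e _; by rewrite inE.
exists (fun L : {set Edge} => [ffun e => e \in L]) => [f _ | L _].
- by apply/ffunP => e; rewrite ffunE inE.
- by apply/setP => e; rewrite inE ffunE.
Qed.

Lemma sum_fact (O : {set Edge}) (F : {set Edge} -> R) :
  \sum_(L : {set Edge}) prL E p L * F L =
  \sum_(A in powerset O) \sum_(B in powerset (~: O))
     prL (E :&: O) p A * prL (E :\: O) p B * F (A :|: B).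
Proof.
rewrite (sum_split O); apply: eq_bigr => A hA; apply: eq_bigr => B hB.
by move: hA hB; rewrite !powersetE => hA hB; rewrite (prL_fact hA hB).
Qed.

Lemma indep (O : {set Edge}) (f g : {set Edge} -> R)
  (hf : forall L L' : {set Edge}, L \subset E -> L' \subset E -> L :\: O = L' :\: O -> f L = f L')
  (hg : forall L L' : {set Edge}, L :&: O = L' :&: O -> g L = g L') :
  \sum_(L : {set Edge}) prL E p L * (f L * g L) =
  (\sum_(A in powerset O) prL (E :&: O) p A * g A) *
  (\sum_(B in powerset (~: O)) prL (E :\: O) p B * f B).
Proof.
rewrite (sum_fact O) big_distrl; apply: eq_bigr => A hA; rewrite big_distrr; apply: eq_bigr => B hB /=.
move: hA hB; rewrite !powersetE => hA hB.
have eA : (A :|: B) :&: O = A :&: O.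
  apply/setP => x; move: (subsetP hA x) (subsetP hB x); rewrite !inE;
  case: (x \in A); case: (x \in B); case: (x \in O) => //= h1 h2;
  (try by have := h1 isT); (try by have := h2 isT).
have eB : (A :|: B) :\: O = B :\: O.
  apply/setP => x; move: (subsetP hA x) (subsetP hB x); rewrite !inE;
  case: (x \in A); case: (x \in B); case: (x \in O) => //= h1 h2;
  (try by have := h1 isT); (try by have := h2 isT).
rewrite (hg _ _ eA).
case: (boolP (A \subset E)) => hAE; last first.
  have -> : prL (E :&: O) p A = 0 by rewrite /prL subsetI (negbTE hAE).
  by rewrite !mul0r.
case: (boolP (B \subset E)) => hBE; last first.
  have -> : prL (E :\: O) p B = 0 by rewrite /prL setDE subsetI (negbTE hBE).
  by rewrite mulr0 !mul0r mulr0.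
rewrite (hf (A :|: B) B) //; last by rewrite subUset hAE.
ring.
Qed.

Lemma indep2 (O : {set Edge}) (f g : {set Edge} -> R)
  (hf : forall L L' : {set Edge}, L \subset E -> L' \subset E -> L :\: O = L' :\: O -> f L = f L')
  (hg : forall L L' : {set Edge}, L :&: O = L' :&: O -> g L = g L') :
  (\sum_(L : {set Edge}) prL E p L * f L) * (\sum_(L : {set Edge}) prL E p L * g L) =
  \sum_(L : {set Edge}) prL E p L * (f L * g L).
Proof.
have Hfg := indep hf hg.
have Hf := indep (g := fun _ => 1) hf (fun _ _ _ => erefl).
have Hg := indep (f := fun _ => 1) (fun _ _ _ _ _ => erefl) hg.
have H1 := indep (O := O) (f := fun _ => 1) (g := fun _ => 1) (fun _ _ _ _ _ => erefl) (fun _ _ _ => erefl).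
have ef : \sum_(L : {set Edge}) prL E p L * f L = \sum_(L : {set Edge}) prL E p L * (f L * 1).
  by apply: eq_bigr => L _; rewrite mulr1.
have eg : \sum_(L : {set Edge}) prL E p L * g L = \sum_(L : {set Edge}) prL E p L * (1 * g L).
  by apply: eq_bigr => L _; rewrite mul1r.
have e1 : \sum_(L : {set Edge}) prL E p L * (1 * 1) = 1.
  transitivity (\sum_(L : {set Edge}) prL E p L); last exact: prL_sum1.
  by apply: eq_bigr => L _; rewrite !mulr1.
rewrite ef eg Hf Hg Hfg /=.
have -> : forall x b c y : R, (x * b) * (c * y) = (c * b) * (x * y) by move=> *; ring.
by rewrite -H1 e1 mulr1.
Qed.

End Prob.

Lemma L2_agree n (E L Lh Lh' : {set 'I_n * 'I_n}) (v : 'I_n) (Y : {set 'I_n}) :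
  Lh :&: [set e in E | e.1 == v] = Lh' :&: [set e in E | e.1 == v] ->
  Y \subset [set v] -> L2 E L Lh Y = L2 E L Lh' Y.
Proof.
move=> heq hsub; rewrite /L2; congr (_ :|: _); apply/setP => e.
have := congr1 (fun X : {set 'I_n * 'I_n} => e \in X) heq; rewrite !inE /=.
case: (boolP (e.1 \in Y)) => hY.
- have hv : e.1 == v by rewrite -in_set1; exact: (subsetP hsub _ hY).
  by rewrite hv.
- by rewrite !andbF.
Qed.

Theorem lemma16 (R : realFieldType) (n : nat) (E : {set 'I_n * 'I_n})
    (p : 'I_n * 'I_n -> R)
    (hp : forall e, e \in E -> 0 <= p e <= 1)
    (k : nat) (hk : (2 <= k <= n)%N)
    (pi : policy n) (hopt : optimal E p pi k)
    (psi : PR n) (hpsi : valid_pr E psi) (hpos : 0 < prob_cons E p psi) :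
  cond_exp2 E p psi
      (fun L Lh => (sigma2 E L Lh psi (dom psi :|: dom (Psi pi Lh)))%:R)
  <= cond_exp1 E p psi (fun L => (sigma L (dom psi))%:R)
     + \sum_(v in ~: dom psi) xsel E p pi v * Delta2 E p psi v.
Proof.
have prL_ge0 : forall L, 0 <= prL E p L.
  move=> L; rewrite /prL; case: ifP => // _; apply: prodr_ge0 => e he.
  have /andP [h0 h1] := hp e he; case: (e \in L) => //; by rewrite subr_ge0.
rewrite /cond_exp2 /cond_exp1 /Delta2 /cond_exp2.
under [X in _ <= _ + X]eq_bigr do rewrite mulrA.
rewrite -big_distrl -mulrDl ler_pM2r ?invr_gt0 //=.
pose c v L Lh := ((sigma2 E L Lh psi (v |: dom psi))%:R -
            (sigma2 E L Lh psi (dom psi))%:R : R).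
pose S Lh := dom (Psi pi Lh).
have key : forall v L, \sum_Lh prL E p Lh * ((v \in S Lh)%:R * c v L Lh) =
     xsel E p pi v * \sum_Lh prL E p Lh * c v L Lh.
  move=> v L; rewrite /xsel.
  rewrite -(@indep2 R n E p [set e in E | e.1 == v] (fun Lh => (v \in S Lh)%:R) (c v L)) //.
  - move=> Lh Lh' hLh hLh' heq.
    have [r hr _] := hopt.1 Lh hLh; have [r' hr' _] := hopt.1 Lh' hLh'.
    rewrite /S /Psi hr hr' /=.
    suff -> : (v \in dom r) = (v \in dom r') by [].
    rewrite /run in hr hr'; apply: (run_fuel_agree _ hr hr') => u huv; rewrite /realis; congr (_ |: _).
    apply/setP => z; rewrite !inE.
    have := congr1 (fun X : {set 'I_n * 'I_n} => (u, z) \in X) heq; rewrite !inE /=.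
    by rewrite (negbTE huv) !andbF /=.
  - move=> Lh Lh' heq; rewrite /c /sigma2.
    rewrite (L2_agree L heq (Y := (v |: dom psi) :\: dom psi)); last first.
      apply/subsetP => x; rewrite in_setD in_setU1 => /andP [hx /orP [/eqP ->|hx']].
      + exact: set11.
      + by rewrite hx' in hx.
    by rewrite (L2_agree L heq (Y := dom psi :\: dom psi)) // setDv sub0set.
have H1 : \sum_L prL E p L * (consistent psi L)%:R * (sigma L (dom psi))%:R =
    \sum_L \sum_Lh prL E p L * prL E p Lh * (consistent psi L)%:R * (sigma L (dom psi))%:R.
  apply: eq_bigr => L _.
  transitivity (prL E p L * (consistent psi L)%:R * (sigma L (dom psi))%:R *
                \sum_Lh prL E p Lh); first by rewrite prL_sum1 mulr1.
  by rewrite mulr_sumr; apply: eq_bigr => Lh _; ring.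
have H2 : \sum_(i in ~: dom psi)
     xsel E p pi i *
     \sum_L
        \sum_Lh
           prL E p L * prL E p Lh * (consistent psi L)%:R *
           ((sigma2 E L Lh psi (i |: dom psi))%:R -
            (sigma2 E L Lh psi (dom psi))%:R) =
   \sum_L \sum_Lh prL E p L * prL E p Lh * (consistent psi L)%:R *
      \sum_(i in ~: dom psi) (i \in S Lh)%:R * c i L Lh.
  under [RHS]eq_bigr do under eq_bigr do rewrite big_distrr.
  under [RHS]eq_bigr do rewrite exchange_big.
  rewrite [RHS]exchange_big; apply: eq_bigr => v _.
  rewrite mulr_sumr; apply: eq_bigr => L _ /=.
  have e1 : \sum_Lh prL E p L * prL E p Lh * (consistent psi L)%:R * c v L Lh =
            prL E p L * (consistent psi L)%:R * \sum_Lh prL E p Lh * c v L Lh.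
    by rewrite mulr_sumr; apply: eq_bigr => Lh _; ring.
  have e2 : \sum_Lh prL E p L * prL E p Lh * (consistent psi L)%:R * ((v \in S Lh)%:R * c v L Lh) =
            prL E p L * (consistent psi L)%:R * \sum_Lh prL E p Lh * ((v \in S Lh)%:R * c v L Lh).
    by rewrite mulr_sumr; apply: eq_bigr => Lh _; ring.
  rewrite e2 key; rewrite /c in e1 |- *; rewrite e1; exact: mulrCA.
rewrite H1 H2 -big_split /=; apply: ler_sum => L _.
rewrite -big_split /=; apply: ler_sum => Lh _.
rewrite -mulrDr; apply: ler_wpM2l.
  by rewrite !mulr_ge0 ?prL_ge0 ?ler0n.
exact: pointwise.
Qed.
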